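(* Let $(T(t))_{t\ge0}$ be a bounded $C_0$-semigroup on a Banach space $E$, and let $t_1,\dots,t_n>0$. Then $$E_{\mathrm{aap}}\cap\ker(T(t_1)-\mathrm{Id})\cdots(T(t_n)-\mathrm{Id})=\ker(T(t_1)-\mathrm{Id})+\cdots+\ker(T(t_n)-\mathrm{Id}).$$
   Context: $E_{\mathrm{aap}}$ is the set of asymptotically almost periodic vectors, i.e. those $x\in E$ whose orbit $\{T(t)x:t\ge0\}$ is relatively compact in $E$. *)

(* Defs.v *)
From HB Require Import structures.
From mathcomp Require Import all_boot all_order all_algebra.
From mathcomp Require Import all_classical all_reals all_analysis.
Set Implicit Arguments. Unset Strict Implicit. Unset Printing Implicit Defensive.
Import Order.TTheory GRing.Theory Num.Theory.
Import numFieldNormedType.Exports.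
Local Open Scope classical_set_scope.
Local Open Scope ring_scope.

Definition C0_semigroup (R : realType) (E : normedModType R)
  (T : R -> {linear E -> E}) : Prop :=
  [/\ (forall x, T 0 x = x),
      (forall s t, 0 <= s -> 0 <= t -> forall x, T (s + t) x = T s (T t x)),
      (forall t, 0 <= t -> exists M : R, forall x, `|T t x| <= M * `|x|) &
      (forall x, (fun t => T t x) @ 0^'+ --> x)].

Definition bounded_semigroup (R : realType) (E : normedModType R)
  (T : R -> {linear E -> E}) : Prop :=
  exists M : R, forall t, 0 <= t -> forall x, `|T t x| <= M * `|x|.

Definition orbit (R : realType) (E : normedModType R)
  (T : R -> {linear E -> E}) (x : E) : set E :=
  [set T t x | t in [set t : R | 0 <= t]].

Definition E_aap (R : realType) (E : normedModType R)
  (T : R -> {linear E -> E}) : set E :=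
  [set x | compact (closure (orbit T x))].

Definition prod_TmI (R : realType) (E : normedModType R)
  (T : R -> {linear E -> E}) (ts : seq R) : E -> E :=
  foldr (fun t g => (fun y => T t y - y) \o g) id ts.

Definition ker_TmI (R : realType) (E : normedModType R)
  (T : R -> {linear E -> E}) (t : R) : set E :=
  [set x | T t x - x = 0].

(* Main.v *)
Require Import Defs.
From HB Require Import structures.
From mathcomp Require Import all_boot all_order all_algebra.
From mathcomp Require Import all_classical all_reals all_analysis.
Import Order.TTheory GRing.Theory Num.Theory.
Import numFieldNormedType.Exports.
Local Open Scope classical_set_scope.
Local Open Scope ring_scope.

Lemma ultra_seq (I : Type) (G : set_system I) (GU : UltraFilter G)
  (X : eqType) (ws : seq X) (Q : X -> set I) :
  G [set i | exists2 w, w \in ws & Q w i] -> exists w, G (Q w).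
Proof.
elim: ws => [|w ws IH] H.
  exfalso; apply: (@filter_not_empty _ G _); apply: filterS H.
  by move=> i [].
case: (in_ultra_setVsetC (Q w) GU) => [|hc]; first by exists w.
apply: IH; apply: filterS (filterI H hc) => i [[w' + Qw'] nQ].
rewrite inE => /orP[/eqP eq|win]; first by subst w'.
by exists w'.
Qed.

Lemma cluster_exists (R : realType) (E : completeNormedModType R) (a : nat -> E) :
  (forall e, 0 < e -> exists ws : seq E, forall N, exists2 w, w \in ws & `|a N - w| < e) ->
  exists z, forall e, 0 < e -> forall N0, exists2 N, (N0 <= N)%N & `|z - a N| < e.
Proof.
move=> TB.
have [G [GU sG]] := @ultraFilterLemma nat eventually _.
have PH : ProperFilter (a @ G) by apply: fmap_proper_filter; exact: ultra_proper.
have cH : cauchy (a @ G).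
  apply/cauchyP => e e0.
  have [ws hws] := TB e e0.
  have := @ultra_seq nat G GU E ws (fun w N => ball w e (a N)).
  case.
    apply: filterS (@filterT _ G _) => N _.
    have [w win hw] := hws N; exists w => //.
    by rewrite -ball_normE /ball_ /= distrC.
  by move=> w Gw; exists w.
have cv := (@cauchy_cvgP _ (a @ G) PH).1 cH.
exists (lim (a @ G)) => e e0 N0.
have Hb : G [set N | ball (lim (a @ G)) e (a N)] by apply: cv; apply: nbhsx_ballx.
have HN : G [set N | (N0 <= N)%N] by apply: sG; exists N0.
have [N [h1 h2]] := filter_ex (filterI HN Hb).
exists N => //; move: h2; by rewrite /= -ball_normE.
Qed.

Lemma compact_net (R : realType) (E : normedModType R) (K A : set E) :
  compact K -> A `<=` K -> forall e, 0 < e ->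
  exists fs : seq E, forall a, A a -> exists2 f, f \in fs & `|a - f| < e.
Proof.
move=> cK AK e e0; move: cK; rewrite compact_cover => cK.
have [D' sD cov] := cK E K (fun f => ball f e) (fun f _ => ball_open f e)
  (fun y Ky => ex_intro2 _ (fun i => ball i e y) y Ky (ballxx y e0)).
exists (finmap.enum_fset D') => a Aa.
have [f fD bf] := cov a (AK a Aa).
exists f => //; move: bf; by rewrite -ball_normE /= distrC.
Qed.

Definition avg {R : realType} {E : normedModType R} (o : nat -> E) (N : nat) : E :=
  (N.+1%:R)^-1 *: \sum_(k < N.+1) o k.

Lemma avg_tb (R : realType) (E : normedModType R) (o : nat -> E) :
  (forall e, 0 < e -> exists fs : seq E, forall k, exists2 f, f \in fs & `|o k - f| < e) ->
  forall e, 0 < e -> exists ws : seq E, forall N, exists2 w, w \in ws & `|avg o N - w| < e.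
Proof.
move=> net e e0.
have e20 : 0 < e / 2 by rewrite divr_gt0.
have [fs hfs] := net _ e20.
pose m := size fs.
pose F := fun i : 'I_m => nth 0 fs i.
pose B := \sum_(i < m) `|F i|.
have B0 : 0 <= B by apply: sumr_ge0 => i _.
pose D := (Num.trunc (B / (e / 2))).+1.
have D0 : 0 < D%:R :> R by rewrite ltr0n.
have DB : B / D%:R < e / 2.
  rewrite ltr_pdivrMr // mulrC -ltr_pdivrMr //.
  by have := leqnn (Num.trunc (B / (e / 2))); rewrite truncn_le_nat.
pose wq (q : {ffun 'I_m -> 'I_D.+1}) := \sum_(i < m) ((q i)%:R / D%:R) *: F i.
exists [seq wq q | q <- enum {ffun 'I_m -> 'I_D.+1}] => N.
pose j k := find (fun f => `|o k - f| < e / 2) fs.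
have jlt k : (j k < m)%N.
  have [f fin hf] := hfs k; rewrite /j -has_find; apply/hasP; by exists f.
pose J k := Ordinal (jlt k).
have jF k : `|o k - F (J k)| < e / 2.
  rewrite /F /=; apply: (@nth_find _ 0 (fun f => `|o k - f| < e / 2)).
  by rewrite has_find; exact: jlt.
pose c (i : 'I_m) : R := \sum_(k < N.+1) ((val i == j k)%:R : R).
pose lam i := (N.+1%:R)^-1 * c i.
have c0 i : 0 <= c i by apply: sumr_ge0 => k _.
have lam0 i : 0 <= lam i by apply: mulr_ge0 => //; rewrite invr_ge0.
have lam1 i : lam i <= 1.
  rewrite /lam mulrC ler_pdivrMr ?ltr0n // mul1r.
  apply: (@le_trans _ _ (\sum_(k < N.+1) (1 : R))).
    by apply: ler_sum => k _; rewrite lern1 leq_b1.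
  by rewrite sumr_const card_ord.
pose q := [ffun i => inord (Num.trunc (D%:R * lam i)) : 'I_D.+1].
have qv i : (q i : nat) = Num.trunc (D%:R * lam i).
  rewrite ffunE inordK // ltnS truncn_le_nat.
  apply: (@le_lt_trans _ _ (D%:R)); last by rewrite ltr_nat.
  by rewrite -{2}(mulr1 D%:R) ler_wpM2l // ltW.
exists (wq q); first by apply: map_f; rewrite mem_enum.
have sumF : \sum_(k < N.+1) F (J k) = \sum_(i < m) c i *: F i.
  under [RHS]eq_bigr => i _ do rewrite scaler_suml.
  rewrite exchange_big /=; apply: eq_bigr => k _.
  rewrite (bigD1 (J k)) //= eqxx scale1r big1 ?addr0 // => i ne.
  suff -> : (val i == j k) = false by rewrite scale0r.
  apply/negbTE; move: ne; apply: contra => /eqP h; apply/eqP; exact: val_inj.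
have decomp : avg o N - wq q =
   (N.+1%:R)^-1 *: \sum_(k < N.+1) (o k - F (J k))
   + \sum_(i < m) (lam i - (q i)%:R / D%:R) *: F i.
  rewrite /avg; have -> : \sum_(k < N.+1) o k = \sum_(k < N.+1) (o k - F (J k)) + \sum_(k < N.+1) F (J k).
    by rewrite -big_split; apply: eq_bigr => k _; rewrite /= subrK.
  rewrite /avg scalerDr sumF scaler_sumr -addrA; congr (_ + _).
  rewrite scaler_sumr /wq -sumrB; apply: eq_bigr => i _; by rewrite /lam scalerA scalerBl.
rewrite decomp; apply: (le_lt_trans (ler_normD _ _)).
rewrite [e]splitr; apply: ler_ltD.
  rewrite normrZ ger0_norm ?invr_ge0 //.
  rewrite mulrC ler_pdivrMr ?ltr0n //.
  apply: (le_trans (ler_norm_sum _ _ _)).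
  apply: (@le_trans _ _ (\sum_(k < N.+1) (e / 2))).
    by apply: ler_sum => k _; apply: ltW.
  by rewrite sumr_const card_ord mulr_natr.
apply: le_lt_trans DB.
apply: (le_trans (ler_norm_sum _ _ _)).
rewrite /B mulr_suml; apply: ler_sum => i _.
rewrite normrZ mulrC ler_wpM2l //.
have h1 : (q i)%:R <= D%:R * lam i by rewrite qv truncn_le mulr_ge0 // ltW.
have h2 : D%:R * lam i < (q i).+1%:R.
  have := truncn_le_nat (D%:R * lam i) (q i); rewrite -qv leqnn => h.
  by rewrite -h.
have -> : lam i - (q i)%:R / D%:R = (D%:R * lam i - (q i)%:R) / D%:R.
  by rewrite mulrBl mulrAC divff ?mul1r // gt_eqF.
rewrite normrM ger0_norm ?subr_ge0 // ger0_norm ?invr_ge0 ?ltW //.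
rewrite ltr_pdivrMr // mulVf ?gt_eqF // ltrBlDl natr1 //.
Qed.

Section Basics.
Variables (R : realType) (E : completeNormedModType R) (T : R -> {linear E -> E}).
Hypothesis C0 : C0_semigroup T.
Variable M : R.
Hypothesis M1 : 1 <= M.
Hypothesis HM : forall t, 0 <= t -> forall x, `|T t x| <= M * `|x|.

Lemma T0 x : T 0 x = x. Proof. by case: C0. Qed.
Lemma TD s t x : 0 <= s -> 0 <= t -> T (s + t) x = T s (T t x).
Proof. by move=> hs ht; case: C0 => _ h _ _; apply: h. Qed.
Lemma Tcomm s t x : 0 <= s -> 0 <= t -> T s (T t x) = T t (T s x).
Proof. by move=> hs ht; rewrite -!TD // addrC. Qed.

Notation P := (prod_TmI T).
Lemma P_cons t ts x : P (t :: ts) x = T t (P ts x) - P ts x.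
Proof. by []. Qed.
Lemma P_nil x : P [::] x = x. Proof. by []. Qed.

Lemma PD ts a u v : P ts (a *: u + v) = a *: P ts u + P ts v.
Proof.
elim: ts => [//|t ts IH]; rewrite !P_cons IH linearD linearZ /=.
by rewrite scalerBr opprD addrACA.
Qed.
Lemma P0 ts : P ts 0 = 0.
Proof. elim: ts => [//|t ts IH]; by rewrite P_cons IH linear0 subrr. Qed.
Lemma PDr ts u v : P ts (u + v) = P ts u + P ts v.
Proof. by have := PD ts 1 u v; rewrite !scale1r. Qed.
Lemma PB ts u v : P ts (u - v) = P ts u - P ts v.
Proof.
have := PD ts (-1) v u; rewrite !scaleN1r => h.
by rewrite [in RHS]addrC -h addrC.
Qed.
Lemma Psum ts n (F : 'I_n -> E) : P ts (\sum_(i < n) F i) = \sum_(i < n) P ts (F i).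
Proof. elim/big_rec2: _ => [|i y1 y2 _ <-]; by rewrite ?P0 ?PDr. Qed.

Lemma Pbound ts : all (fun t => 0 <= t) ts ->
  exists C, 0 <= C /\ forall u, `|P ts u| <= C * `|u|.
Proof.
elim: ts => [_|t ts IH /andP[t0 /IH [C [C0' HC]]]].
  by exists 1; split => // u; rewrite mul1r.
exists ((M + 1) * C); split.
  by apply: mulr_ge0 => //; apply: addr_ge0 => //; apply: le_trans M1.
move=> u; rewrite P_cons; apply: (le_trans (ler_normB _ _)).
apply: (@le_trans _ _ (M * `|P ts u| + `|P ts u|)); first by rewrite lerD2r HM.
rewrite -{2}(mul1r `|P ts u|) -mulrDl -mulrA ler_wpM2l //.
by apply: addr_ge0 => //; apply: le_trans M1.
Qed.

Lemma Pcomm s ts u : 0 <= s -> all (fun t => 0 <= t) ts ->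
  P ts (T s u) = T s (P ts u).
Proof.
move=> s0; elim: ts => [//|t ts IH /andP[t0 /IH h]].
by rewrite !P_cons h Tcomm // linearB.
Qed.

Lemma Pker s ts v : 0 <= s -> s \in ts -> all (fun t => 0 <= t) ts ->
  T s v = v -> P ts v = 0.
Proof.
move=> s0; elim: ts => [//|t ts IH]; rewrite inE => /orP[/eqP <-|sin]
   /andP[t0 tsp] hfix.
  by rewrite P_cons -Pcomm // hfix subrr.
by rewrite P_cons IH // linear0 subrr.
Qed.

Lemma iterT p k x : 0 <= p -> iter k (T p) x = T (k%:R * p) x.
Proof.
move=> p0; elim: k => [|k IH]; first by rewrite mul0r T0.
rewrite iterS IH -TD //; last by apply: mulr_ge0.
by rewrite -addn1 natrD mulrDl mul1r addrC.
Qed.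

Lemma M0 : 0 < M. Proof. by apply: lt_le_trans M1. Qed.

Lemma rc x e : 0 < e -> exists2 d, 0 < d & forall h, 0 <= h -> h < d -> `|T h x - x| < e.
Proof.
move=> e0; case: C0 => _ _ _ /(_ x) /cvgrPdist_lt /(_ e e0) H.
move: H => /nbhs_ballP [d /= d0 Hd].
exists d => // h h0 hd; case: (eqVneq h 0) => [->|hne].
  by rewrite T0 subrr normr0.
rewrite distrC; apply: Hd.
  by rewrite /ball /= sub0r normrN ger0_norm.
by rewrite lt_neqAle eq_sym hne h0.
Qed.

Lemma closeT x e : 0 < e -> exists2 d, 0 < d &
  forall a b, 0 <= a -> a <= b -> b - a < d -> `|T a x - T b x| < e.
Proof.
move=> e0; have [d d0 Hd] := @rc x (e / M) (divr_gt0 e0 M0).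
exists d => // a b a0 ab bad.
have -> : b = a + (b - a) by rewrite addrC subrK.
rewrite TD //; last by rewrite subr_ge0.
rewrite -linearB; apply: (le_lt_trans (HM a a0 (x - T (b - a) x))).
rewrite mulrC -ltr_pdivlMr ?M0 // distrC; apply: Hd => //.
by rewrite subr_ge0.
Qed.

Lemma gcont x : continuous (fun s : R => T `|s| x).
Proof.
move=> s0; apply/cvgrPdist_lt => e e0.
have [d d0 Hd] := @closeT x e e0.
apply/nbhs_ballP; exists d => //= s; rewrite /ball /= => hs.
have hab : `| `|s0| - `|s| | < d by apply: le_lt_trans (ler_dist_dist _ _) hs.
case: (leP `|s0| `|s|) => h.
  apply: Hd => //; apply: le_lt_trans hab; rewrite distrC; exact: ler_norm.
rewrite distrC; apply: Hd => //; first exact: ltW.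
by apply: le_lt_trans hab; exact: ler_norm.
Qed.

Lemma orbit_ker_sub p v : 0 < p -> T p v = v ->
  Defs.orbit T v `<=` [set T `|s| v | s in `[0, p]].
Proof.
move=> p0 hv _ [s /= s0 <-].
pose k := Num.trunc (s / p).
have kle : (k%:R * p <= s).
  by rewrite -ler_pdivlMr // truncn_le divr_ge0 // ltW.
have klt : s < k.+1%:R * p.
  rewrite -ltr_pdivrMr //; have := leqnn k; by rewrite /k truncn_le_nat.
exists (s - k%:R * p).
  rewrite /= in_itv /= subr_ge0 kle /= lerBlDr; apply: ltW; by rewrite -[X in _ < X + _]mul1r -mulrDl addrC natr1.
have r0 : 0 <= s - k%:R * p by rewrite subr_ge0.
rewrite ger0_norm //.
symmetry; transitivity (T ((s - k%:R * p) + k%:R * p) v); first by rewrite subrK.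
rewrite TD //; last by apply: mulr_ge0 => //; apply: ltW.
by rewrite -(@iterT p k v (ltW p0)) iter_fix.
Qed.

Lemma ker_aap p v : 0 < p -> T p v = v -> E_aap T v.
Proof.
move=> p0 hv; rewrite /E_aap /= -precompactE.
apply: precompact_subset (@orbit_ker_sub p v p0 hv) _.
apply: compact_precompact; first exact: norm_hausdorff.
apply: continuous_compact; last exact: segment_compact.
apply: continuous_subspaceT; exact: gcont.
Qed.

Lemma aap_op (f : E * E -> E) u v : continuous f -> E_aap T u -> E_aap T v ->
  (forall t, 0 <= t -> T t (f (u, v)) = f (T t u, T t v)) -> E_aap T (f (u, v)).
Proof.
move=> fc hu hv hf; rewrite /E_aap /= -precompactE.
apply: (@precompact_subset _ _ (f @` (closure (Defs.orbit T u) `*` closure (Defs.orbit T v)))).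
  move=> _ [s /= s0 <-]; exists (T s u, T s v); last by rewrite hf.
  by split; apply: subset_closure; exists s.
apply: compact_precompact; first exact: norm_hausdorff.
apply: continuous_compact; last exact: compact_setX.
exact: continuous_subspaceT.
Qed.

Lemma aapD u v : E_aap T u -> E_aap T v -> E_aap T (u + v).
Proof.
move=> hu hv; have := @aap_op (fun z => z.1 + z.2) u v add_continuous hu hv.
by apply => t t0 /=; rewrite linearD.
Qed.

Lemma aapB u v : E_aap T u -> E_aap T v -> E_aap T (u - v).
Proof.
move=> hu hv; have := @aap_op (fun z => z.1 - z.2) u v (@sub_continuous _) hu hv.
by apply => t t0 /=; rewrite linearB.
Qed.

Lemma aap0 : E_aap T 0.
Proof.
have := @ker_aap 1 0 ltr01 (linear0 _); by [].
Qed.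

Definition clus (a : nat -> E) z := forall e, 0 < e -> forall N0, exists2 N, (N0 <= N)%N & `|z - a N| < e.

Lemma eq_of_small (w : E) : (forall e, 0 < e -> `|w| < e) -> w = 0.
Proof.
move=> H; case: (eqVneq w 0) => // hne.
by have := H `|w|; rewrite normr_gt0 ltxx => /(_ hne).
Qed.

Lemma small_inv (K e : R) : 0 < e -> 0 <= K ->
  exists N0 : nat, forall N, (N0 <= N)%N -> (N.+1%:R)^-1 * K < e.
Proof.
move=> e0 K0; exists (Num.trunc (K / e)) => N hN.
rewrite mulrC ltr_pdivrMr ?ltr0n // mulrC -ltr_pdivrMr //.
apply: (@lt_le_trans _ _ (Num.trunc (K / e)).+1%:R).
  by have := leqnn (Num.trunc (K / e)); rewrite truncn_le_nat.
by rewrite ler_nat ltnS.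
Qed.

Lemma orbit_iter p k x : 0 <= p -> Defs.orbit T x (iter k (T p) x).
Proof.
by move=> p0; rewrite iterT //; exists (k%:R * p) => //; rewrite /= mulr_ge0.
Qed.

Lemma norm_iter p k x : 0 <= p -> `|iter k (T p) x| <= M * `|x|.
Proof. by move=> p0; rewrite iterT //; apply: HM; rewrite mulr_ge0. Qed.

Lemma exists_cluster p x : 0 < p -> E_aap T x ->
  exists z, clus (avg (fun k => iter k (T p) x)) z.
Proof.
move=> p0 hx; apply: cluster_exists; apply: avg_tb => e e0.
have [fs hfs] := @compact_net R E _ _ hx (@subset_closure _ _) e e0.
by exists fs => k; apply: hfs; apply: orbit_iter; apply: ltW.
Qed.

Lemma cluster_fixed p x z : 0 < p -> clus (avg (fun k => iter k (T p) x)) z ->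
  T p z = z.
Proof.
move=> p0 hz; set o := (fun k => iter k (T p) x).
have key N : `|T p (avg o N) - avg o N| <= (N.+1%:R)^-1 * ((M + 1) * `|x|).
  rewrite /avg linearZ linear_sum /= -scalerBr.
  have -> : \sum_(k < N.+1) T p (o k) - \sum_(k < N.+1) o k = o N.+1 - o 0.
    rewrite -sumrB.
    rewrite -(big_mkord xpredT (fun k => T p (o k) - o k)).
    have -> : \sum_(0 <= k < N.+1) (T p (o k) - o k) = \sum_(0 <= k < N.+1) (o k.+1 - o k) by [].
    by rewrite telescope_sumr.
  rewrite normrZ ger0_norm ?invr_ge0 // ler_wpM2l ?invr_ge0 //.
  apply: (le_trans (ler_normB _ _)); rewrite mulrDl mul1r lerD //.
  exact: norm_iter (ltW p0).
apply: subr0_eq; apply: eq_of_small => e e0.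
have e20 : 0 < e / 2 by rewrite divr_gt0.
have M10 : 0 < M + 1 by rewrite addr_gt0 // M0.
have [N0 hN0] := @small_inv ((M + 1) * `|x|) (e / 2) e20 (mulr_ge0 (ltW M10) (normr_ge0 _)).
have [N hN hzN] := hz (e / 2 / (M + 1)) (divr_gt0 e20 M10) N0.
have -> : T p z - z = T p (z - avg o N) + (T p (avg o N) - avg o N) - (z - avg o N).
  by rewrite linearB /= [in RHS]addrA subrK opprB addrA subrK.
apply: (le_lt_trans (ler_normB _ _)).
apply: (le_lt_trans (lerD (ler_normD _ _) (lexx _))).
rewrite [e]splitr.
have h1 : `|T p (z - avg o N)| <= M * `|z - avg o N| by apply: HM; apply: ltW.
have h2 := le_lt_trans (key N) (hN0 N hN).
rewrite addrAC; apply: (@le_lt_trans _ _ ((M + 1) * `|z - avg o N| + `|T p (avg o N) - avg o N|)).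
  by rewrite lerD2r mulrDl mul1r lerD2r.
apply: ltr_leD; last exact: ltW.
by rewrite mulrC -ltr_pdivlMr.
Qed.

Lemma Pscale ts a u : P ts (a *: u) = a *: P ts u.
Proof. by have := PD ts a u 0; rewrite addr0 P0 addr0. Qed.

Lemma cluster_P p x z ts : 0 < p -> all (fun t => 0 <= t) ts ->
  T p (P ts x) = P ts x -> clus (avg (fun k => iter k (T p) x)) z ->
  P ts z = P ts x.
Proof.
move=> p0 tsp hfix hz; set o := (fun k => iter k (T p) x).
have key N : P ts (avg o N) = P ts x.
  rewrite /avg Pscale Psum.
  have -> : \sum_(k < N.+1) P ts (o k) = \sum_(k < N.+1) P ts x.
    apply: eq_bigr => k _; rewrite /o iterT ?ltW // Pcomm //; last first.
      by apply: mulr_ge0 => //; apply: ltW.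
    by rewrite -(@iterT p k _ (ltW p0)) iter_fix.
  by rewrite sumr_const card_ord -(scaler_nat N.+1 (P ts x)) scalerA mulVf ?scale1r // pnatr_eq0.
have [C [C0' HC]] := @Pbound ts tsp.
apply/eqP; rewrite -subr_eq0; apply/eqP; apply: eq_of_small => e e0.
have C10 : 0 < C + 1 by exact: (ltr_wpDl C0' ltr01).
have [N hN hzN] := hz (e / (C + 1)) (divr_gt0 e0 C10) 0%N.
rewrite -(key N) -PB; apply: (le_lt_trans (HC _)).
apply: (@le_lt_trans _ _ ((C + 1) * `|z - avg o N|)).
  by rewrite ler_wpM2r // lerDl.
by rewrite mulrC -ltr_pdivlMr.
Qed.

Lemma incl_left n (t : 'I_n -> R) x : (forall i, 0 < t i) -> E_aap T x ->
  P [seq t i | i <- enum 'I_n] x = 0 ->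
  exists xs : 'I_n -> E, (forall i, ker_TmI T (t i) (xs i)) /\ x = \sum_(i < n) xs i.
Proof.
elim: n t x => [|n IH] t x tpos hx.
  rewrite enum_ord0 => /= ->.
  by exists (fun _ => 0); split => [[]//|]; rewrite big_ord0.
rewrite enum_ordSl /= -map_comp.
set ts := [seq (t \o lift ord0) i | i <- enum 'I_n] => h.
set p := t ord0.
have p0 : 0 < p by apply: tpos.
have hfix : T p (P ts x) = P ts x by apply: subr0_eq.
have tsp : all (fun s => 0 <= s) ts.
  by apply/allP => s /mapP [i _ ->]; exact: ltW (tpos _).
have [z hz] := @exists_cluster p x p0 hx.
have zf := @cluster_fixed p x z p0 hz.
have zP := @cluster_P p x z ts p0 tsp hfix hz.
have [xs' [hk' hs']] : exists xs : 'I_n -> E,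
    (forall i, ker_TmI T ((t \o lift ord0) i) (xs i)) /\ x - z = \sum_(i < n) xs i.
  apply: IH => //.
    by move=> i; apply: tpos.
    exact: (@aapB x z hx (@ker_aap p z p0 zf)).
  by rewrite PB zP subrr.
exists (fun i => if unlift ord0 i is Some j then xs' j else z); split.
  move=> i; case: (unliftP ord0 i) => [j ->|->].
    exact: hk'.
  by rewrite /ker_TmI /= zf subrr.
rewrite big_ord_recl unlift_none.
under eq_bigr => i _ do rewrite liftK.
by rewrite -hs' addrC subrK.
Qed.

Lemma incl_right n (t : 'I_n -> R) (xs : 'I_n -> E) : (forall i, 0 < t i) ->
  (forall i, ker_TmI T (t i) (xs i)) ->
  E_aap T (\sum_(i < n) xs i) /\ P [seq t i | i <- enum 'I_n] (\sum_(i < n) xs i) = 0.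
Proof.
move=> tpos hk; split.
  apply: (big_ind (E_aap T)); first exact: aap0.
    by move=> u v hu hv; apply: aapD.
  by move=> i _; apply: (@ker_aap (t i)) => //; apply: subr0_eq; apply: hk.
rewrite Psum big1 // => i _.
apply: (@Pker (t i)); first exact: ltW.
- by apply: map_f; rewrite mem_enum.
- by apply/allP => s /mapP [j _ ->]; exact: ltW (tpos _).
- by apply: subr0_eq; apply: hk.
Qed.

End Basics.

Theorem lemma2p3 (R : realType) (E : completeNormedModType R)
  (T : R -> {linear E -> E}) (n : nat) (t : 'I_n -> R) :
  C0_semigroup T -> bounded_semigroup T -> (forall i, 0 < t i) ->
  E_aap T `&` [set x | prod_TmI T [seq t i | i <- enum 'I_n] x = 0] =
  [set x | exists xs : 'I_n -> E,
      (forall i, ker_TmI T (t i) (xs i)) /\ x = \sum_(i < n) xs i].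
Proof.
move=> hC [M0 HM0] tpos.
pose M := Num.max M0 1.
have M1 : 1 <= M by rewrite le_max lexx orbT.
have HM : forall s, 0 <= s -> forall x, `|T s x| <= M * `|x|.
  move=> s s0 x; apply: (le_trans (HM0 s s0 x)).
  by rewrite ler_wpM2r // le_max lexx.
apply/seteqP; split => x /=.
  by move=> [hx hp]; exact: (@incl_left R E T hC M M1 HM n t x tpos hx hp).
move=> [xs [hk ->]]; have [h1 h2] := @incl_right R E T hC M M1 HM n t xs tpos hk.
by split.
Qed.
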